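(* Let $X$ be a subshift with language $\mathcal L$, let $K$ be a positive integer (used in the density $\mathcal D$), let $w\in\mathcal L_n$, and let $\mathcal B=\{z^{(1)},\dots,z^{(p)}\}\subseteq\mathcal L_m$ satisfy: for every $y\in\mathcal L$ with $|y|>\max\{n,m\}$ and all $1\le j<j'\le|y|-\max\{m,n\}$ with $y_{[j,j+n-1]}=y_{[j',j'+n-1]}=w$, there exist $1\le i\le p$ and $j\le k<j'$ with $y_{[k,k+m-1]}=z^{(i)}$. Then for every $x\in X$ there exists $1\le j\le p$ with $$\mathcal D(z^{(j)},x)\ge\frac{1}{p(1+3n/m)}\,\mathcal D(w,x).$$
   Context: A subshift is a nonempty closed $X\subseteq\mathcal A^{\mathbb N}$ ($\mathcal A$ finite) invariant under the left shift; its language $\mathcal L$ is the set of finite nonempty words occurring in its points; $\mathcal L_n$ those of length $n$. (In the paper $K$ is the eventual constant value of $|\mathcal L_{n+1}|-|\mathcal L_n|$.) Upper density: for $x\in X$, $w\in\mathcal L$ with $n=|w|$, let $r(w,x,j)=1$ if $x_{[k,k+n-1]}=w$ for some $k$ with $(j-1)(K+1)n<k\le j(K+1)n$ and $0$ otherwise, and $\mathcal D(w,x)=\limsup_{N\to\infty}\frac1N\sum_{j=1}^Nr(w,x,j)$. *)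

(* Defs.v *)
From Stdlib Require Import Reals List Arith ClassicalEpsilon.
Import ListNotations.
Open Scope R_scope.

(* A point of the full shift is a map nat -> A; positions are natural numbers. *)

Definition wordAt {A : Type} (x : nat -> A) (k n : nat) : list A :=
  map (fun t => x (k + t)%nat) (seq 0 n).

(* y_{[j, j+n-1]} for a finite word y, with 1-indexed position j. *)
Definition subword {A : Type} (y : list A) (j n : nat) : list A :=
  firstn n (skipn (j - 1) y).

Definition shift {A : Type} (x : nat -> A) : nat -> A := fun i => x (S i).

Definition IsSubshift {A : Type} (X : (nat -> A) -> Prop) : Prop :=
  (exists x, X x) /\
  (forall x, (forall N : nat, exists y, X y /\ forall i, (i < N)%nat -> y i = x i) -> X x) /\
  (forall x, X x -> X (shift x)).

Definition InLang {A : Type} (X : (nat -> A) -> Prop) (u : list A) : Prop :=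
  u <> [] /\ exists x k, X x /\ wordAt x k (length u) = u.

Definition rInd {A : Type} (K : nat) (w : list A) (x : nat -> A) (j : nat) : R :=
  let n := length w in
  if excluded_middle_informative
       (exists k, ((j - 1) * (K + 1) * n < k)%nat /\ (k <= j * (K + 1) * n)%nat
                  /\ wordAt x k n = w)
  then 1 else 0.

Definition avgR {A : Type} (K : nat) (w : list A) (x : nat -> A) (N : nat) : R :=
  fold_right Rplus 0 (map (rInd K w x) (seq 1 N)) / INR N.

Definition IsLimsup (u : nat -> R) (l : R) : Prop :=
  (forall eps, eps > 0 -> exists N, forall k, (N <= k)%nat -> u k <= l + eps) /\
  (forall eps, eps > 0 -> forall N, exists k, (N <= k)%nat /\ u k >= l - eps).

Definition limsup (u : nat -> R) : R := epsilon (inhabits 0) (IsLimsup u).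

Definition Dens {A : Type} (K : nat) (w : list A) (x : nat -> A) : R :=
  limsup (fun N => avgR K w x N).

(* Main.v *)
Require Import Defs.
From Stdlib Require Import Reals List Arith Lia Lra ClassicalEpsilon Classical.
Import ListNotations.
Open Scope R_scope.

Definition sumR (f : nat -> R) (s N : nat) : R := fold_right Rplus 0 (map f (seq s N)).

Lemma sumR_0 f s : sumR f s 0 = 0. Proof. reflexivity. Qed.
Lemma sumR_S f s N : sumR f s (S N) = f s + sumR f (S s) N. Proof. reflexivity. Qed.

Lemma sumR_ext f g s N : (forall j, (s <= j < s + N)%nat -> f j = g j) -> sumR f s N = sumR g s N.
Proof.
  revert s; induction N; intros s H; [reflexivity|].
  rewrite !sumR_S. rewrite (H s) by lia. rewrite (IHN (S s)); [reflexivity|].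
  intros; apply H; lia.
Qed.

Lemma sumR_le f g s N : (forall j, (s <= j < s + N)%nat -> f j <= g j) -> sumR f s N <= sumR g s N.
Proof.
  revert s; induction N; intros s H; [rewrite !sumR_0; lra|].
  rewrite !sumR_S. assert (f s <= g s) by (apply H; lia).
  assert (sumR f (S s) N <= sumR g (S s) N) by (apply IHN; intros; apply H; lia). lra.
Qed.

Lemma sumR_plus f g s N : sumR (fun j => f j + g j) s N = sumR f s N + sumR g s N.
Proof.
  revert s; induction N; intros s; [rewrite !sumR_0; lra|].
  rewrite !sumR_S, IHN. lra.
Qed.

Lemma sumR_scal c f s N : sumR (fun j => c * f j) s N = c * sumR f s N.
Proof.
  revert s; induction N; intros s; [rewrite !sumR_0; lra|].
  rewrite !sumR_S, IHN. lra.
Qed.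

Lemma sumR_const c s N : sumR (fun _ => c) s N = INR N * c.
Proof.
  revert s; induction N; intros s; [rewrite !sumR_0; simpl; lra|].
  rewrite !sumR_S, IHN, S_INR. lra.
Qed.

Lemma sumR_swap (F : nat -> nat -> R) s1 N s2 M :
  sumR (fun j => sumR (fun b => F j b) s2 M) s1 N = sumR (fun b => sumR (fun j => F j b) s1 N) s2 M.
Proof.
  revert s1; induction N; intros s1.
  - rewrite sumR_0. rewrite (sumR_ext _ (fun _ => 0)) by (intros; reflexivity).
    rewrite sumR_const; lra.
  - rewrite sumR_S, IHN. rewrite <- sumR_plus. apply sumR_ext. intros; reflexivity.
Qed.

Lemma sumR_nonneg f s N : (forall j, (s <= j < s + N)%nat -> 0 <= f j) -> 0 <= sumR f s N.
Proof.
  intros H. rewrite <- (Rmult_0_r (INR N)). rewrite <- sumR_const with (s := s).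
  apply sumR_le; auto.
Qed.

Lemma sumR_ge_term f s N j0 : (forall j, (s <= j < s + N)%nat -> 0 <= f j) ->
  (s <= j0 < s + N)%nat -> f j0 <= sumR f s N.
Proof.
  revert s; induction N; intros s H Hj; [lia|].
  rewrite sumR_S. destruct (Nat.eq_dec j0 s).
  - subst. assert (0 <= sumR f (S s) N) by (apply sumR_nonneg; intros; apply H; lia). lra.
  - assert (f j0 <= sumR f (S s) N) by (apply IHN; [intros; apply H; lia| lia]).
    assert (0 <= f s) by (apply H; lia). lra.
Qed.

Definition indP (P : Prop) : R := if excluded_middle_informative P then 1 else 0.

Lemma indP_T (P : Prop) : P -> indP P = 1.
Proof. intros H; unfold indP; destruct excluded_middle_informative; tauto. Qed.
Lemma indP_F (P : Prop) : ~ P -> indP P = 0.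
Proof. intros H; unfold indP; destruct excluded_middle_informative; tauto. Qed.
Lemma indP_01 (P : Prop) : 0 <= indP P <= 1.
Proof. unfold indP; destruct excluded_middle_informative; lra. Qed.
Lemma indP_ext (P Q : Prop) : (P <-> Q) -> indP P = indP Q.
Proof. intros H; unfold indP; do 2 destruct excluded_middle_informative; tauto. Qed.
Lemma indP_imp (P Q : Prop) : (P -> Q) -> indP P <= indP Q.
Proof. intros H; unfold indP; do 2 destruct excluded_middle_informative; try lra; tauto. Qed.
Lemma indP_or (P Q S : Prop) : (P -> Q \/ S) -> indP P <= indP Q + indP S.
Proof. intros H; unfold indP; do 3 destruct excluded_middle_informative; try lra; tauto. Qed.

Lemma sumR_ind_zero (P : nat -> Prop) s N : (forall j, (s <= j < s + N)%nat -> ~ P j) ->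
  sumR (fun j => indP (P j)) s N = 0.
Proof.
  intros H. rewrite (sumR_ext _ (fun _ => 0)). rewrite sumR_const; lra.
  intros; apply indP_F; auto.
Qed.

Lemma sumR_ind_nonneg (P : nat -> Prop) s N : 0 <= sumR (fun j => indP (P j)) s N.
Proof. apply sumR_nonneg; intros; apply indP_01. Qed.

Lemma sumR_at_most_one (P : nat -> Prop) s N :
  (forall j1 j2, P j1 -> P j2 -> j1 = j2) -> sumR (fun j => indP (P j)) s N <= 1.
Proof.
  intros Hu; revert s; induction N; intros s; [rewrite sumR_0; lra|].
  rewrite sumR_S. destruct (classic (P s)).
  - rewrite indP_T by auto. rewrite sumR_ind_zero. lra.
    intros j Hj Pj. specialize (Hu _ _ H Pj). lia.
  - rewrite indP_F by auto. specialize (IHN (S s)). lra.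
Qed.

Lemma sumR_interval lo hi s N :
  sumR (fun j => indP (lo <= j <= hi)%nat) s N <= INR (S hi - Nat.max lo s).
Proof.
  revert s; induction N; intros s; [rewrite sumR_0; apply pos_INR|].
  rewrite sumR_S. specialize (IHN (S s)).
  destruct (classic (lo <= s <= hi)%nat).
  - rewrite indP_T by auto.
    replace (S hi - Nat.max lo s)%nat with (S (S hi - Nat.max lo (S s))) by lia.
    rewrite S_INR; lra.
  - rewrite indP_F by auto.
    destruct (Nat.lt_ge_cases s lo).
    + replace (Nat.max lo s) with (Nat.max lo (S s)) by lia. lra.
    + replace (S hi - Nat.max lo (S s))%nat with 0%nat in IHN by lia.
      simpl in IHN. pose proof (pos_INR (S hi - Nat.max lo s)). lra.
Qed.

Lemma least_nat (P : nat -> Prop) : (exists n, P n) -> exists n, P n /\ forall k, P k -> (n <= k)%nat.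
Proof.
  intros [n Hn]. apply NNPP; intros Hno.
  assert (forall t, forall k, (k <= t)%nat -> ~ P k).
  { induction t; intros k Hk Pk.
    - apply Hno; exists k; split; auto; intros; lia.
    - destruct (Nat.eq_dec k (S t)); [|apply (IHt k); auto; lia].
      subst. apply Hno; exists (S t); split; auto. intros k' Pk'.
      destruct (Nat.le_gt_cases (S t) k'); auto. exfalso; apply (IHt k'); auto; lia. }
  apply (H n n); auto.
Qed.

Lemma sumR_diam (P : nat -> Prop) d s N :
  (forall j1 j2, P j1 -> P j2 -> (j1 <= j2)%nat -> (j2 - j1 <= d)%nat) ->
  sumR (fun j => indP (P j)) s N <= INR (S d).
Proof.
  intros Hd. destruct (classic (exists j, P j)) as [Hex|Hno].
  - destruct (least_nat P Hex) as [j0 [Pj0 Hmin]].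
    apply Rle_trans with (sumR (fun j => indP (j0 <= j <= j0 + d)%nat) s N).
    + apply sumR_le; intros j _. apply indP_imp. intros Pj. pose proof (Hmin j Pj).
      pose proof (Hd j0 j Pj0 Pj H). lia.
    + eapply Rle_trans; [apply sumR_interval|]. apply le_INR. lia.
  - rewrite sumR_ind_zero. apply pos_INR. intros j _ Pj; apply Hno; eauto.
Qed.
From Stdlib Require Import Reals List Arith Lia Lra ClassicalEpsilon Classical.
From Coquelicot Require Coquelicot.
Import ListNotations.
Open Scope R_scope.

Lemma map_seq_shift {B : Type} (f : nat -> B) s L :
  map f (seq s L) = map (fun t => f (s + t)%nat) (seq 0 L).
Proof.
  revert s f; induction L; intros s f; [reflexivity|].
  simpl. f_equal; [f_equal; lia|]. rewrite IHL. rewrite (IHL 1%nat).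
  apply map_ext; intros; f_equal; lia.
Qed.

Lemma firstn_seq' n s L : (n <= L)%nat -> firstn n (seq s L) = seq s n.
Proof.
  revert s L; induction n; intros s L H; [reflexivity|].
  destruct L; [lia|]. simpl. f_equal. apply IHn; lia.
Qed.

Lemma length_wordAt {A} (x : nat -> A) k L : length (wordAt x k L) = L.
Proof. unfold wordAt; rewrite length_map, length_seq; reflexivity. Qed.

Lemma subword_wordAt {A} (x : nat -> A) k L j l : (j - 1 + l <= L)%nat ->
  subword (wordAt x k L) j l = wordAt x (k + (j - 1)) l.
Proof.
  intros H. unfold subword, wordAt. rewrite skipn_map, firstn_map, skipn_seq, firstn_seq' by lia.
  rewrite map_seq_shift. apply map_ext; intros; f_equal; lia.
Qed.

Lemma limsup_spec (u : nat -> R) : (forall N, 0 <= u N <= 1) ->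
  IsLimsup u (limsup u) /\ 0 <= limsup u <= 1.
Proof.
  intros Hb.
  assert (Hex : exists l, IsLimsup u l).
  { destruct (Coquelicot.Lim_seq.ex_LimSup_seq u) as [l Hl]. destruct l as [l| |]; simpl in Hl.
    - exists l. split.
      + intros eps He. destruct (Hl (mkposreal eps He)) as [_ [N HN]]. exists N.
        intros k Hk. specialize (HN k Hk). simpl in HN. lra.
      + intros eps He N. destruct (Hl (mkposreal eps He)) as [H1 _].
        destruct (H1 N) as [k [Hk Hu]]. exists k. split; auto. simpl in Hu. lra.
    - exfalso. destruct (Hl 1 0%nat) as [k [_ Hk]]. specialize (Hb k). lra.
    - exfalso. destruct (Hl 0) as [N HN]. specialize (HN N (le_n _)). specialize (Hb N). lra. }
  assert (Hs : IsLimsup u (limsup u)).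
  { unfold limsup. apply (epsilon_spec (inhabits 0) (IsLimsup u)). exact Hex. }
  split; auto. destruct Hs as [H1 H2]. split.
  - apply Rnot_lt_le; intros Hl. destruct (H1 (- limsup u / 2)) as [N HN]; [lra|].
    specialize (HN N (le_n _)). specialize (Hb N). lra.
  - apply Rnot_lt_le; intros Hl. destruct (H2 ((limsup u - 1)/2) ltac:(lra) 0%nat) as [k [_ Hk]].
    specialize (Hb k). lra.
Qed.

Lemma rInd_01 {A} K (w : list A) x j : 0 <= rInd K w x j <= 1.
Proof. unfold rInd. destruct excluded_middle_informative; lra. Qed.

Lemma avgR_01 {A} K (w : list A) x N : 0 <= avgR K w x N <= 1.
Proof.
  unfold avgR. change (fold_right Rplus 0 (map (rInd K w x) (seq 1 N))) with (sumR (rInd K w x) 1 N).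
  assert (H0 : 0 <= sumR (rInd K w x) 1 N) by (apply sumR_nonneg; intros; apply rInd_01).
  assert (H1 : sumR (rInd K w x) 1 N <= INR N * 1).
  { rewrite <- sumR_const with (s := 1%nat). apply sumR_le; intros; apply rInd_01. }
  destruct N.
  - simpl INR. unfold Rdiv. rewrite Rinv_0, Rmult_0_r. lra.
  - assert (0 < INR (S N)) by (apply lt_0_INR; lia). split.
    + apply Rmult_le_pos; [lra| left; apply Rinv_0_lt_compat; lra].
    + apply Rmult_le_reg_r with (INR (S N)); [lra|]. unfold Rdiv. rewrite Rmult_assoc, Rinv_l; lra.
Qed.

Lemma Dens_spec {A} K (w : list A) x : IsLimsup (avgR K w x) (Dens K w x) /\ 0 <= Dens K w x <= 1.
Proof. apply limsup_spec. intros; apply avgR_01. Qed.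
From Stdlib Require Import Reals List Arith Lia Lra ClassicalEpsilon Classical.
Import ListNotations.
Open Scope R_scope.

Definition occ {A} (x : nat -> A) (u : list A) (L j : nat) : Prop :=
  exists k, ((j - 1) * L < k)%nat /\ (k <= j * L)%nat /\ wordAt x k (length u) = u.

Lemma rInd_occ {A} K (u : list A) x j : rInd K u x j = indP (occ x u ((K + 1) * length u) j).
Proof.
  unfold rInd, indP, occ. cbv zeta.
  do 2 destruct excluded_middle_informative; auto; exfalso.
  - apply n. destruct e as [k Hk]; exists k. rewrite !Nat.mul_assoc; exact Hk.
  - apply n. destruct e as [k Hk]; exists k. rewrite <- !Nat.mul_assoc; exact Hk.
Qed.

Lemma gap_lemma (A : Type) (X : (nat -> A) -> Prop) (n m p : nat) (w : list A) (z : nat -> list A)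
  (HB : forall y : list A, InLang X y -> (length y > Nat.max n m)%nat ->
        forall j j' : nat, (1 <= j)%nat -> (j < j')%nat ->
        (j' <= length y - Nat.max m n)%nat ->
        subword y j n = w -> subword y j' n = w ->
        exists i k, (1 <= i <= p)%nat /\ (j <= k < j')%nat /\ subword y k m = z i)
  x (Hx : X x) k1 k2 : (k1 < k2)%nat -> wordAt x k1 n = w -> wordAt x k2 n = w ->
  exists q, (k1 <= q < k2)%nat /\ exists i, (1 <= i <= p)%nat /\ wordAt x q m = z i.
Proof.
  intros Hk H1 H2.
  set (L := (k2 - k1 + 1 + Nat.max m n)%nat).
  set (y := wordAt x k1 L).
  assert (Hly : length y = L) by apply length_wordAt.
  assert (HL : InLang X y).
  { split. - intros E. assert (length y = 0%nat) by (rewrite E; reflexivity). lia.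
    - exists x, k1. split; auto. rewrite Hly. reflexivity. }
  destruct (HB y HL ltac:(lia) 1%nat (k2 - k1 + 1)%nat ltac:(lia) ltac:(lia) ltac:(lia)) as [i [k [Hi [Hk' Hs]]]].
  - unfold y. rewrite subword_wordAt by lia. rewrite Nat.add_0_r; exact H1.
  - unfold y. rewrite subword_wordAt by lia. replace (k1 + (k2 - k1 + 1 - 1))%nat with k2 by lia. exact H2.
  - exists (k1 + (k - 1))%nat. split; [lia|]. exists i. split; auto.
    unfold y in Hs. rewrite subword_wordAt in Hs by lia. exact Hs.
Qed.
Open Scope nat_scope.
Lemma block_exists b q : (1 <= b -> 1 <= q -> exists be, 1 <= be /\ (be - 1) * b < q /\ q <= be * b)%nat.
Proof.
  intros Hb Hq. pose proof (Nat.div_mod_eq (q + b - 1) b) as E.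
  pose proof (Nat.mod_upper_bound (q + b - 1) b ltac:(lia)) as Hr.
  set (t := (q + b - 1) / b) in *. set (r := (q + b - 1) mod b) in *.
  exists t. destruct t as [|t]; [lia|]. split; [lia|]. replace (S t - 1) with t by lia. nia.
Qed.
Lemma diam_arith K n m be j1 j2 : (1 <= n)%nat -> ((be - 1) * ((K + 1) * m) < j1 * ((K + 1) * n))%nat ->
  ((j2 - 1) * ((K + 1) * n) < be * ((K + 1) * m))%nat -> (j1 <= j2)%nat -> (j2 - j1 <= (m + n - 1) / n)%nat.
Proof.
  intros Hn H1 H2 H12. apply Nat.div_le_lower_bound; [lia|].
  destruct (Nat.eq_dec j1 j2); [subst; lia|].
  assert (Ht : ((j2 - j1 - 1) * n < m)%nat).
  { destruct be as [|be]; [simpl in H2; lia|]. replace (S be - 1)%nat with be in H1 by lia.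
    set (t := (j2 - j1 - 1)%nat). replace (j2 - 1)%nat with (j1 + t)%nat in H2 by lia.
    assert ((t * ((K+1)*n)) < (K+1) * m)%nat by nia.
    apply (Nat.mul_lt_mono_pos_l (K+1)); [lia|]. nia. }
  nia.
Qed.

Close Scope nat_scope.
Open Scope R_scope.
Lemma core (A : Type) (X : (nat -> A) -> Prop) (K n m p : nat) (w : list A) (z : nat -> list A)
  (Hn : length w = n) (Hz : forall i, (1 <= i <= p)%nat -> length (z i) = m)
  (Hn1 : (1 <= n)%nat) (Hm1 : (1 <= m)%nat)
  (HB : forall y : list A, InLang X y -> (length y > Nat.max n m)%nat ->
        forall j j' : nat, (1 <= j)%nat -> (j < j')%nat ->
        (j' <= length y - Nat.max m n)%nat ->
        subword y j n = w -> subword y j' n = w ->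
        exists i k, (1 <= i <= p)%nat /\ (j <= k < j')%nat /\ subword y k m = z i)
  x (Hx : X x) (N M : nat) (HNM : (N * n <= M * m)%nat) :
  sumR (rInd K w x) 1 N - 1 <=
  INR ((m + n - 1) / n + 2) * sumR (fun i => sumR (rInd K (z i) x) 1 M) 1 p.
Proof.
  set (a := ((K + 1) * n)%nat). set (b := ((K + 1) * m)%nat).
  assert (Ha : (1 <= a)%nat) by (unfold a; nia). assert (Hb : (1 <= b)%nat) by (unfold b; nia).
  assert (HNMab : (N * a <= M * b)%nat) by (unfold a, b; nia).
  set (hw := fun j => occ x w a j).
  assert (rw : forall j, rInd K w x j = indP (hw j)) by (intros; rewrite rInd_occ, Hn; reflexivity).
  set (zpos := fun q => exists i, (1 <= i <= p)%nat /\ wordAt x q m = z i).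
  set (hz := fun be => exists q, ((be - 1) * b < q)%nat /\ (q <= be * b)%nat /\ zpos q).
  assert (Hhz : forall be, indP (hz be) <= sumR (fun i => rInd K (z i) x be) 1 p).
  { intros be. destruct (classic (hz be)) as [[q [H1 [H2 [i [Hi Hw]]]]]|Hn0].
    - rewrite (indP_T (hz be)) by (unfold hz, zpos; exists q; split; [auto|split; [auto|exists i; auto]]).
      assert (rInd K (z i) x be = 1).
      { rewrite rInd_occ, indP_T; auto. rewrite Hz by auto. unfold occ; exists q. rewrite Hz by auto. auto. }
      rewrite <- H. apply (sumR_ge_term (fun i0 => rInd K (z i0) x be)); [intros; apply rInd_01| lia].
    - rewrite indP_F by auto. apply sumR_nonneg; intros; apply rInd_01. }
  set (kw := fun j => epsilon (inhabits 0%nat) (fun k => ((j - 1) * a < k)%nat /\ (k <= j * a)%nat /\ wordAt x k n = w)).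
  assert (kw_spec : forall j, hw j -> ((j - 1) * a < kw j)%nat /\ (kw j <= j * a)%nat /\ wordAt x (kw j) n = w).
  { intros j Hj. unfold kw. apply (epsilon_spec (inhabits 0%nat) (fun k => ((j - 1) * a < k)%nat /\ (k <= j * a)%nat /\ wordAt x k n = w)).
    destruct Hj as [k Hk]. rewrite Hn in Hk. eauto. }
  assert (kw_lt : forall j j2, hw j -> hw j2 -> (j < j2)%nat -> (kw j < kw j2)%nat).
  { intros j j2 H1 H2 H12. destruct (kw_spec j H1) as [_ [A1 _]]. destruct (kw_spec j2 H2) as [A2 _].
    assert (j * a <= (j2 - 1) * a)%nat by (apply Nat.mul_le_mono_r; lia). lia. }
  set (Jp := fun j => hw j /\ exists j2, (j < j2 <= N)%nat /\ hw j2).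
  set (qj := fun j => epsilon (inhabits 0%nat) (fun q => ((kw j <= q)%nat /\ zpos q) /\ forall q', (kw j <= q')%nat /\ zpos q' -> (q <= q')%nat)).
  assert (qj_spec : forall j, Jp j -> (kw j <= qj j)%nat /\ zpos (qj j) /\
             forall j2, hw j2 -> (j < j2)%nat -> (qj j < kw j2)%nat).
  { intros j [Hj [j2 [Hj2 Hw2]]].
    assert (Hq : ((kw j <= qj j)%nat /\ zpos (qj j)) /\ forall q', (kw j <= q')%nat /\ zpos q' -> (qj j <= q')%nat).
    { unfold qj. apply (epsilon_spec (inhabits 0%nat) (fun q => ((kw j <= q)%nat /\ zpos q) /\ forall q', (kw j <= q')%nat /\ zpos q' -> (q <= q')%nat)).
      apply least_nat.
      destruct (gap_lemma A X n m p w z HB x Hx (kw j) (kw j2)) as [q [Hq1 Hq2]].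
      - apply kw_lt; auto; lia.
      - apply kw_spec; auto.
      - apply kw_spec; auto.
      - exists q. split; [lia|exact Hq2]. }
    destruct Hq as [[Hq1 Hq2] Hq3]. split; [auto|split; [auto|]].
    intros j3 Hw3 Hj3.
    destruct (gap_lemma A X n m p w z HB x Hx (kw j) (kw j3)) as [q [Hq4 Hq5]].
    - apply kw_lt; auto.
    - apply kw_spec; auto.
    - apply kw_spec; auto.
    - assert (qj j <= q)%nat by (apply Hq3; split; [lia|auto]). lia. }
  assert (S1 : sumR (fun j => indP (hw j)) 1 N <= sumR (fun j => indP (Jp j)) 1 N + 1).
  { set (Lst := fun j => hw j /\ (j <= N)%nat /\ ~ exists j2, (j < j2 <= N)%nat /\ hw j2).
    eapply Rle_trans.
    - apply (sumR_le _ (fun j => indP (Jp j) + indP (Lst j))). intros j Hj. apply indP_or.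
      intros Hwj. destruct (classic (exists j2, (j < j2 <= N)%nat /\ hw j2)).
      + left; split; auto.
      + right; split; [auto|split; [lia|auto]].
    - rewrite sumR_plus. assert (sumR (fun j => indP (Lst j)) 1 N <= 1); [|lra].
      apply sumR_at_most_one. intros j1 j2 [A1 [B1 C1]] [A2 [B2 C2]].
      destruct (Nat.lt_total j1 j2) as [H|[H|H]]; auto; exfalso.
      + apply C1; exists j2; split; [lia|auto].
      + apply C2; exists j1; split; [lia|auto]. }
  set (inb := fun be q => ((be - 1) * b < q)%nat /\ (q <= be * b)%nat).
  assert (S2 : forall j, (1 <= j < 1 + N)%nat -> indP (Jp j) <= sumR (fun be => indP (Jp j /\ inb be (qj j))) 1 M).
  { intros j Hj. destruct (classic (Jp j)) as [HJ|HJ].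
    - rewrite indP_T by auto. destruct (qj_spec j HJ) as [Q1 [Q2 Q3]].
      destruct HJ as [Hwj [j2 [Hj2 Hw2]]].
      pose proof (Q3 j2 Hw2 ltac:(lia)) as Q4. destruct (kw_spec j Hwj) as [K1 _].
      destruct (kw_spec j2 Hw2) as [_ [K2 _]].
      assert (j2 * a <= N * a)%nat by (apply Nat.mul_le_mono_r; lia).
      assert (Hq1 : (1 <= qj j)%nat) by nia. destruct (block_exists b (qj j) Hb Hq1) as [be [B1 [B2 B3]]].
      assert (be <= M)%nat.
      { destruct (Nat.le_gt_cases be M); auto. assert (M * b <= (be - 1) * b)%nat by (apply Nat.mul_le_mono_r; lia). lia. }
      assert (Ht : indP (Jp j /\ inb be (qj j)) = 1).
      { apply indP_T. split; [split; [auto|exists j2; auto]|split; auto]. }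
      rewrite <- Ht. apply (sumR_ge_term (fun be0 => indP (Jp j /\ inb be0 (qj j)))); [intros; apply indP_01| lia].
    - rewrite indP_F by auto. apply sumR_ind_nonneg. }
  set (d := ((m + n - 1) / n)%nat).
  assert (S4 : forall be, sumR (fun j => indP (Jp j /\ inb be (qj j))) 1 N <= INR (d + 2) * indP (hz be)).
  { intros be. destruct (classic (hz be)) as [Hh|Hh].
    - rewrite (indP_T (hz be)) by auto. rewrite Rmult_1_r.
      set (Ab := fun j => Jp j /\ inb be (qj j) /\ (kw j <= (be - 1) * b)%nat).
      set (Bb := fun j => ((be - 1) * b < j * a)%nat /\ ((j - 1) * a < be * b)%nat).
      eapply Rle_trans.
      + apply (sumR_le _ (fun j => indP (Ab j) + indP (Bb j))). intros j _. apply indP_or.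
        intros [HJ HI]. destruct (le_lt_dec (kw j) ((be - 1) * b)) as [Hle|Hlt].
        * left; split; auto.
        * right. destruct (qj_spec j HJ) as [Q1 _]. destruct HJ as [Hwj _].
          destruct (kw_spec j Hwj) as [K1 [K2 _]]. destruct HI. split; lia.
      + rewrite sumR_plus. rewrite plus_INR. replace (INR 2) with 2 by (simpl; lra).
        assert (sumR (fun j => indP (Ab j)) 1 N <= 1).
        { apply sumR_at_most_one. intros j1 j2 [J1 [I1 L1]] [J2 [I2 L2]].
          assert (Hgen : forall u v, Jp u -> inb be (qj u) -> Jp v -> (kw v <= (be - 1) * b)%nat -> ~ (u < v)%nat).
          { intros u v Ju Iu Jv Lv Huv. destruct (qj_spec u Ju) as [_ [_ Q3]]. destruct Jv as [Hwv _].
            pose proof (Q3 v Hwv Huv). destruct Iu. lia. }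
          destruct (Nat.lt_total j1 j2) as [H|[H|H]]; auto; exfalso.
          - exact (Hgen j1 j2 J1 I1 J2 L2 H).
          - exact (Hgen j2 j1 J2 I2 J1 L1 H). }
        assert (sumR (fun j => indP (Bb j)) 1 N <= INR (S d)).
        { apply sumR_diam. intros j1 j2 [B1 _] [_ B2] H12. unfold d. unfold a, b in *.
          apply (diam_arith K n m be); auto. }
        rewrite S_INR in H0. lra.
    - rewrite (indP_F (hz be)) by auto. rewrite Rmult_0_r. rewrite sumR_ind_zero; [lra|].
      intros j _ [HJ HI]. apply Hh. exists (qj j). destruct (qj_spec j HJ) as [_ [Q2 _]]. destruct HI. auto. }
  assert (E1 : sumR (rInd K w x) 1 N = sumR (fun j => indP (hw j)) 1 N) by (apply sumR_ext; intros; apply rw).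
  rewrite E1.
  apply Rle_trans with (sumR (fun j => indP (Jp j)) 1 N); [lra|].
  eapply Rle_trans; [apply sumR_le; exact S2|].
  rewrite sumR_swap.
  eapply Rle_trans; [apply sumR_le; intros be _; apply S4|].
  rewrite sumR_scal. apply Rmult_le_compat_l; [apply pos_INR|].
  eapply Rle_trans; [apply sumR_le; intros be _; apply Hhz|].
  rewrite sumR_swap. apply Rle_refl.
Qed.
From Stdlib Require Import Reals List Arith Lia Lra ClassicalEpsilon Classical.
Open Scope R_scope.

Lemma sumR_lt f g s N : (1 <= N)%nat -> (forall j, (s <= j < s + N)%nat -> f j < g j) -> sumR f s N < sumR g s N.
Proof.
  intros HN H. destruct N; [lia|]. rewrite !sumR_S.
  assert (f s < g s) by (apply H; lia).
  assert (sumR f (S s) N <= sumR g (S s) N) by (apply sumR_le; intros; left; apply H; lia). lra.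
Qed.

Lemma uniform_N (P : nat -> nat -> Prop) p :
  (forall i, (1 <= i <= p)%nat -> exists N, forall k, (N <= k)%nat -> P i k) ->
  exists N0, forall i, (1 <= i <= p)%nat -> forall k, (N0 <= k)%nat -> P i k.
Proof.
  induction p; intros H.
  - exists 0%nat. intros; lia.
  - destruct IHp as [N1 HN1]. { intros; apply H; lia. }
    destruct (H (S p) ltac:(lia)) as [N2 HN2]. exists (Nat.max N1 N2).
    intros i Hi k Hk. destruct (Nat.eq_dec i (S p)); [subst; apply HN2; lia|]. apply HN1; lia.
Qed.

Lemma avg_sum {A} K (u : list A) x N : (1 <= N)%nat -> sumR (rInd K u x) 1 N = INR N * avgR K u x N.
Proof.
  intros HN. unfold avgR. change (fold_right Rplus 0 (map (rInd K u x) (seq 1 N))) with (sumR (rInd K u x) 1 N).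
  assert (0 < INR N) by (apply lt_0_INR; lia). field. lra.
Qed.
From Stdlib Require Import Reals List Arith Lia Lra ClassicalEpsilon Classical.
Open Scope R_scope.

Theorem mainTheorem17 (A : Type) (enumA : list A) (HA : forall a : A, In a enumA)
  (X : (nat -> A) -> Prop) (HX : IsSubshift X)
  (K : nat) (HK : (0 < K)%nat)
  (n m p : nat) (w : list A) (z : nat -> list A)
  (Hw : InLang X w /\ length w = n)
  (Hp : (1 <= p)%nat)
  (Hz : forall i, (1 <= i <= p)%nat -> InLang X (z i) /\ length (z i) = m)
  (HB : forall y : list A, InLang X y -> (length y > Nat.max n m)%nat ->
        forall j j' : nat, (1 <= j)%nat -> (j < j')%nat ->
        (j' <= length y - Nat.max m n)%nat ->
        subword y j n = w -> subword y j' n = w ->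
        exists i k, (1 <= i <= p)%nat /\ (j <= k < j')%nat /\ subword y k m = z i) :
  forall x : nat -> A, X x ->
    exists j, (1 <= j <= p)%nat /\
      Dens K (z j) x >= / (INR p * (1 + 3 * INR n / INR m)) * Dens K w x.
Proof.
  intros x Hx.
  destruct Hw as [[Hwne _] Hn].
  assert (Hn1 : (1 <= n)%nat) by (destruct w; [congruence| simpl in Hn; lia]).
  assert (Hm1 : (1 <= m)%nat).
  { destruct (Hz 1%nat ltac:(lia)) as [[Hne _] Hl]. destruct (z 1%nat); [congruence| simpl in Hl; lia]. }
  assert (Hzl : forall i, (1 <= i <= p)%nat -> length (z i) = m) by (intros; apply Hz; auto).
  assert (Rn : 0 < INR n) by (apply lt_0_INR; lia).
  assert (Rm : 0 < INR m) by (apply lt_0_INR; lia).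
  assert (Rp : 0 < INR p) by (apply lt_0_INR; lia).
  set (c' := 1 + 3 * INR n / INR m).
  assert (Hc'1 : 1 <= c').
  { unfold c'. assert (0 <= 3 * INR n / INR m) by (unfold Rdiv; apply Rmult_le_pos; [lra| left; apply Rinv_0_lt_compat; lra]). lra. }
  set (d := Dens K w x). set (e := fun i => Dens K (z i) x).
  destruct (Dens_spec K w x) as [[Dw1 Dw2] Dw3]. fold d in Dw1, Dw2, Dw3.
  apply NNPP. intros Hneg.
  assert (Hlt : forall j, (1 <= j <= p)%nat -> e j < / (INR p * c') * d).
  { intros j Hj. apply Rnot_le_lt. intros Hle. apply Hneg. exists j. split; auto. unfold e in Hle. fold c' d. lra. }
  set (E := sumR e 1 p).
  assert (HE : E < d / c').
  { unfold E. eapply Rlt_le_trans. apply (sumR_lt _ (fun _ => / (INR p * c') * d)); auto.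
    intros; apply Hlt; lia. rewrite sumR_const. right. field. lra. }
  assert (HE0 : 0 <= E).
  { unfold E. apply sumR_nonneg. intros j _. unfold e. apply (Dens_spec K (z j) x). }
  assert (HEp : E <= INR p).
  { unfold E. rewrite <- (Rmult_1_r (INR p)). rewrite <- (sumR_const 1 1%nat). apply sumR_le.
    intros j _. unfold e. apply (Dens_spec K (z j) x). }
  set (g := d - c' * E).
  assert (Hg : 0 < g).
  { unfold g. assert (c' * E < c' * (d / c')) by (apply Rmult_lt_compat_l; lra).
    replace (c' * (d / c')) with d in H by (field; lra). lra. }
  set (eps := g / (2 * (1 + c' * INR p))).
  assert (Heps : 0 < eps).
  { unfold eps. apply Rdiv_lt_0_compat; [lra|]. assert (0 < c' * INR p) by (apply Rmult_lt_0_compat; lra). lra. }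
  assert (Heps2 : eps * (1 + c' * INR p) = g / 2).
  { unfold eps. field. assert (0 < c' * INR p) by (apply Rmult_lt_0_compat; lra). lra. }
  destruct (uniform_N (fun i k => avgR K (z i) x k <= e i + eps) p) as [N0 HN0].
  { intros i Hi. destruct (Dens_spec K (z i) x) as [[D1 _] _]. apply D1. lra. }
  set (Y := 1 + c' * (INR m / INR n) * (E + INR p)).
  destruct (INR_archimed (g / 2) Y ltac:(lra)) as [N2 HN2].
  destruct (Dw2 eps Heps (Nat.max N2 (Nat.max (m * N0) 1))) as [N [HN HuN]].
  set (M := ((N * n + m - 1) / m)%nat).
  assert (HM : (N * n <= M * m <= N * n + m - 1)%nat).
  { pose proof (Nat.div_mod_eq (N * n + m - 1) m) as Ed.
    pose proof (Nat.mod_upper_bound (N * n + m - 1) m ltac:(lia)) as Hr. fold M in Ed. lia. }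
  assert (HMN0 : (N0 <= M)%nat) by nia.
  assert (HM1 : (1 <= M)%nat) by nia.
  assert (HN1 : (1 <= N)%nat) by lia.
  pose proof (core A X K n m p w z Hn Hzl Hn1 Hm1 HB x Hx N M ltac:(lia)) as Hcore.
  set (dd := ((m + n - 1) / n)%nat) in Hcore.
  assert (Hdd : (dd * n <= m + n - 1)%nat) by (pose proof (Nat.Div0.mul_div_le (m + n - 1) n); fold dd in H; lia).
  set (c := INR (dd + 2)) in Hcore.
  assert (Hc : c * INR n <= INR m + 3 * INR n).
  { unfold c. rewrite <- mult_INR. replace (INR m + 3 * INR n) with (INR (m + 3 * n)) by (rewrite plus_INR, mult_INR; simpl; lra).
    apply le_INR. lia. }
  assert (HMr : INR M * INR m <= INR N * INR n + INR m).
  { rewrite <- !mult_INR, <- plus_INR. apply le_INR. lia. }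
  rewrite (avg_sum K w x N HN1) in Hcore.
  assert (HSZ : sumR (fun i => sumR (rInd K (z i) x) 1 M) 1 p <= INR M * (E + INR p * eps)).
  { rewrite (sumR_ext _ (fun i => INR M * avgR K (z i) x M)) by (intros; apply avg_sum; auto).
    rewrite sumR_scal. apply Rmult_le_compat_l; [apply pos_INR|].
    unfold E. rewrite <- (sumR_const eps 1%nat), <- sumR_plus. apply sumR_le. intros i Hi. apply HN0; auto; lia. }
  assert (Hc0 : 0 <= c) by apply pos_INR.
  assert (HcM : c * INR M <= c' * (INR N + INR m / INR n)).
  { apply Rmult_le_reg_r with (INR n * INR m); [apply Rmult_lt_0_compat; lra|].
    replace (c' * (INR N + INR m / INR n) * (INR n * INR m)) with ((INR m + 3 * INR n) * (INR N * INR n + INR m))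
      by (unfold c'; field; lra).
    replace (c * INR M * (INR n * INR m)) with ((c * INR n) * (INR M * INR m)) by ring.
    apply Rmult_le_compat; auto.
    - apply Rmult_le_pos; lra.
    - apply Rmult_le_pos; [apply pos_INR|lra]. }
  assert (HEe : 0 <= E + INR p * eps) by (assert (0 <= INR p * eps) by (apply Rmult_le_pos; lra); lra).
  assert (Hchain : INR N * (d - eps) - 1 <= c' * (INR N + INR m / INR n) * (E + INR p * eps)).
  { assert (INR N * (d - eps) <= INR N * avgR K w x N) by (apply Rmult_le_compat_l; [apply pos_INR|lra]).
    assert (c * sumR (fun i => sumR (rInd K (z i) x) 1 M) 1 p <= c * (INR M * (E + INR p * eps)))
      by (apply Rmult_le_compat_l; auto).
    assert (c * INR M * (E + INR p * eps) <= c' * (INR N + INR m / INR n) * (E + INR p * eps))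
      by (apply Rmult_le_compat_r; auto).
    lra. }
  assert (Heps1 : eps <= 1).
  { assert (g <= 1) by (unfold g; assert (0 <= c' * E) by (apply Rmult_le_pos; lra); lra).
    assert (1 <= 1 + c' * INR p) by (assert (0 < c' * INR p) by (apply Rmult_lt_0_compat; lra); lra).
    unfold eps. apply Rmult_le_reg_r with (2 * (1 + c' * INR p)); [lra|].
    unfold Rdiv. rewrite Rmult_assoc, Rinv_l by lra. lra. }
  assert (Hmn : 0 <= c' * (INR m / INR n)) by (apply Rmult_le_pos; [lra| unfold Rdiv; apply Rmult_le_pos; [lra| left; apply Rinv_0_lt_compat; lra]]).
  assert (H3 : c' * (INR m / INR n) * (E + INR p * eps) <= c' * (INR m / INR n) * (E + INR p)).
  { apply Rmult_le_compat_l; auto. assert (INR p * eps <= INR p * 1) by (apply Rmult_le_compat_l; lra). lra. }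
  assert (Hfin : INR N * (g / 2) <= Y).
  { assert (Hg2 : g / 2 = d - c' * E - eps - c' * INR p * eps).
    { assert (eps + c' * INR p * eps = g / 2) by (rewrite <- Heps2; ring). unfold g in *. lra. }
    rewrite Hg2.
    assert (E1 : c' * (INR N + INR m / INR n) * (E + INR p * eps) =
            INR N * (c' * E) + INR N * (c' * INR p * eps) + c' * (INR m / INR n) * (E + INR p * eps)) by ring.
    assert (E2 : INR N * (d - eps) = INR N * d - INR N * eps) by ring.
    assert (E3 : INR N * (d - c' * E - eps - c' * INR p * eps) = INR N * d - INR N * (c' * E) - INR N * eps - INR N * (c' * INR p * eps)) by ring.
    rewrite E3. unfold Y. lra. }
  assert (INR N2 <= INR N) by (apply le_INR; lia).
  assert (INR N2 * (g / 2) <= INR N * (g / 2)) by (apply Rmult_le_compat_r; lra).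
  lra.
Qed.
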